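(* Let $R$ be a finite local Frobenius ring which is not a field and has odd characteristic, with a fixed primitive additive character $\psi$, and let $\tau$ be a non-primitive multiplicative character of $R$. Then $$\sum_{a\in R^\times}|K_\tau(a)|^4=3\,|R^\times|\,|R|^2.$$
   Context: All rings are finite and commutative with identity; $R^\times$ is the unit group; $M$ is the maximal ideal. An additive character $(R,+)\to\mathbb{C}^*$ is primitive if the only ideal on which it is identically $1$ is $(0)$; $R$ is Frobenius if such a character exists. A multiplicative character is a homomorphism $R^\times\to\mathbb{C}^*$; its conductor is $R$ if it is trivial, and otherwise the largest ideal $I\subseteq M$ such that it is identically $1$ on $1+I$; it is primitive if its conductor is $(0)$. $K_\tau(a)=\sum_{u\in R^\times}\tau(u)\psi(u+au^{-1})$. Odd characteristic means $R/M$ has odd characteristic. *)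

(* Defs.v *)
From HB Require Import structures.
From mathcomp Require Import all_boot all_order all_algebra all_fingroup all_field.
Set Implicit Arguments. Unset Strict Implicit. Unset Printing Implicit Defensive.
Import Order.TTheory GRing.Theory Num.Theory.
Local Open Scope ring_scope.

Section Defs.
Variable R : finComUnitRingType.

Definition is_ideal (I : {set R}) : Prop :=
  [/\ 0 \in I,
      (forall x y, x \in I -> y \in I -> x + y \in I),
      (forall x, x \in I -> - x \in I) &
      (forall r x, x \in I -> r * x \in I)].

(* The set of non-units; in a local ring this is the maximal ideal M. *)
Definition nonunits : {set R} := [set x : R | x \isn't a GRing.unit].

Definition is_local : Prop := is_ideal nonunits.

Definition is_add_char (psi : R -> algC) : Prop :=
  (forall x y, psi (x + y) = psi x * psi y) /\ (forall x, psi x != 0).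

Definition primitive_add_char (psi : R -> algC) : Prop :=
  is_add_char psi /\
  forall I : {set R}, is_ideal I -> (forall x, x \in I -> psi x = 1) -> I = [set 0].

Definition is_mult_char (tau : {unit R} -> algC) : Prop :=
  (forall u v, tau (u * v)%g = tau u * tau v) /\ (forall u, tau u != 0).

Definition trivial_char (tau : {unit R} -> algC) : Prop := forall u, tau u = 1.

(* tau is identically 1 on 1 + I (elements of 1 + I with I in M are units). *)
Definition trivial_on_1plus (tau : {unit R} -> algC) (I : {set R}) : Prop :=
  forall u : {unit R}, val u - 1 \in I -> tau u = 1.

Definition is_conductor (tau : {unit R} -> algC) (I : {set R}) : Prop :=
  (trivial_char tau -> I = setT) /\
  (~ trivial_char tau ->
     [/\ is_ideal I, I \subset nonunits, trivial_on_1plus tau I &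
           forall J : {set R}, is_ideal J -> J \subset nonunits ->
             trivial_on_1plus tau J -> J \subset I]).

Definition primitive_mult_char (tau : {unit R} -> algC) : Prop :=
  is_conductor tau [set 0].

Definition Ktau (tau : {unit R} -> algC) (psi : R -> algC) (a : R) : algC :=
  \sum_(u : {unit R}) tau u * psi (val u + a * (val u)^-1).

End Defs.

(* Main.v *)
Require Import Defs.
From HB Require Import structures.
From mathcomp Require Import all_boot all_order all_algebra all_fingroup all_field.
From mathcomp Require Import ring.
Set Implicit Arguments. Unset Strict Implicit. Unset Printing Implicit Defensive.
Import Order.TTheory GRing.Theory Num.Theory.
Local Open Scope ring_scope.

Lemma sum_bij (T : finType) (A B : {set T}) (g : T -> T) (F : T -> algC) :
  {in A &, injective g} -> (forall x, x \in A -> g x \in B) -> (#|B| <= #|A|)%N ->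
  \sum_(x in B) F x = \sum_(x in A) F (g x).
Proof.
move=> inj hAB hc.
have e : g @: A = B.
  apply/eqP; rewrite eqEcard card_in_imset // hc andbT.
  by apply/subsetP => y /imsetP [x hx ->]; apply: hAB.
by rewrite -e big_imset.
Qed.

Lemma root1_conj (z : algC) n : (0 < n)%N -> z ^+ n = 1 -> z^* = z^-1.
Proof.
move=> hn hz.
have h1 : `|z| = 1.
  apply/eqP; rewrite -(pexpr_eq1 hn) ?normr_ge0 //.
  by rewrite -normrX hz normr1.
by rewrite invC_norm h1 expr1n invr1 mul1r.
Qed.
Lemma addord (R : finComUnitRingType) (x : R) : exists n, (0 < n)%N /\ x *+ n = 0.
Proof.
exists #[x]%g; split; first exact: order_gt0.
by have := expg_order x; rewrite FinRing.zmodXgE.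
Qed.
Lemma mulord (R : finComUnitRingType) (u : {unit R}) : exists n, (0 < n)%N /\ (u ^+ n)%g = 1%g.
Proof. exists #[u]%g; split; [exact: order_gt0| exact: expg_order]. Qed.
Lemma sum_if (T : finType) (A : {set T}) (c : algC) :
  \sum_(x in [set: T]) (if x \in A then c else 0) = c *+ #|A|.
Proof.
rewrite big_mkcond /= (eq_bigr (fun x => if x \in A then c else 0)); last first.
  by move=> x _; rewrite inE.
by rewrite -big_mkcond /= sumr_const.
Qed.
Lemma sum_setT (T : finType) (F : T -> algC) :
  \sum_(x in [set: T]) F x = \sum_x F x.
Proof. by rewrite big_mkcond /=; apply: eq_bigr => x _; rewrite inE. Qed.
Lemma sum_if_sub (T : finType) (A B : {set T}) (c : algC) : B \subset A ->
  \sum_(x in A) (if x \in B then c else 0) = c *+ #|B|.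
Proof.
move=> /subsetP hBA.
rewrite -big_mkcondr sumr_const; congr (_ *+ _).
apply: eq_card => x; rewrite /=; apply/andP/idP => [[]|hx] //.
by split => //; apply: hBA.
Qed.
Lemma sum_if_subF (T : finType) (A B : {set T}) (F : T -> algC) : B \subset A ->
  \sum_(x in A) (if x \in B then F x else 0) = \sum_(x in B) F x.
Proof.
move=> /subsetP hBA.
rewrite -big_mkcondr; apply: eq_bigl => x /=; apply/andP/idP => [[]|hx] //.
by split => //; apply: hBA.
Qed.
Lemma sum_if_in (T : finType) (A : {set T}) (P : bool) (F : T -> algC) :
  (if P then \sum_(x in A) F x else 0) = \sum_(x in A) (if P then F x else 0).
Proof. by case: P => //; rewrite big1. Qed.
Lemma sum_unit (R : finComUnitRingType) (F : R -> algC) :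
  \sum_(u : {unit R}) F (val u) = \sum_(x in [set x : R | x \is a GRing.unit]) F x.
Proof.
have e : val @: [set: {unit R}] = [set x : R | x \is a GRing.unit].
  apply/setP => x; rewrite inE; apply/imsetP/idP => [[u _ ->]|hx].
    exact: (valP u).
  by exists (FinRing.Unit hx).
rewrite -e big_imset /=; last by move=> u v _ _; apply: val_inj.
by apply: eq_bigl => u; rewrite inE.
Qed.

Section Pf.
Variable R : finComUnitRingType.
Variable psi : R -> algC.
Variable tau : {unit R} -> algC.
Hypothesis Hloc : is_local R.
Hypothesis HnotF : exists x : R, x != 0 /\ x \isn't a GRing.unit.
Hypothesis H2 : (2%:R : R) \notin nonunits R.
Hypothesis Hpsi : primitive_add_char psi.
Hypothesis Htau : is_mult_char tau.

Definition nu (x : R) : bool := x \isn't a GRing.unit.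

Lemma nuE x : (x \in nonunits R) = nu x.
Proof. by rewrite inE. Qed.

Lemma nuD x y : nu x -> nu y -> nu (x + y).
Proof. case: Hloc => _ HD _ _; rewrite -!nuE; exact: HD. Qed.
Lemma nuN x : nu x -> nu (- x).
Proof. case: Hloc => _ _ HN _; rewrite -!nuE; exact: HN. Qed.
Lemma nuMl r x : nu x -> nu (r * x).
Proof. case: Hloc => _ _ _ HM; rewrite -!nuE; exact: HM. Qed.
Lemma nuMr r x : nu x -> nu (x * r).
Proof. by rewrite mulrC; apply: nuMl. Qed.
Lemma nuB x y : nu x -> nu y -> nu (x - y).
Proof. by move=> hx hy; apply: nuD => //; apply: nuN. Qed.
Lemma nu0 : nu 0.
Proof. by rewrite /nu unitr0. Qed.
Lemma nuBC x y : nu (x - y) = nu (y - x).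
Proof. by apply/idP/idP => /nuN; rewrite opprB. Qed.
Lemma unit_nuD u m : u \is a GRing.unit -> nu m -> (u + m) \is a GRing.unit.
Proof.
move=> hu hm; apply/negPn/negP => h.
have : nu (u + m - m) by apply: nuB.
by rewrite addrK /nu hu.
Qed.
Lemma nuM x y : nu (x * y) = nu x || nu y.
Proof. by rewrite /nu unitrM negb_and. Qed.
Lemma unit2 : (2%:R : R) \is a GRing.unit.
Proof. by move: H2; rewrite nuE /nu negbK. Qed.
Lemma unit_nu_eq u v : u \is a GRing.unit -> nu (v - u) -> v \is a GRing.unit.
Proof. by move=> hu h; have := unit_nuD hu h; rewrite addrC subrK. Qed.

Lemma psiD x y : psi (x + y) = psi x * psi y.
Proof. by case: Hpsi => [[]]. Qed.
Lemma psi_neq0 x : psi x != 0.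
Proof. by case: Hpsi => [[]]. Qed.
Lemma psi0 : psi 0 = 1.
Proof.
apply: (mulfI (psi_neq0 0)); by rewrite -psiD addr0 mulr1.
Qed.
Lemma psiN x : psi (- x) = (psi x)^-1.
Proof.
apply: (mulfI (psi_neq0 x)); by rewrite -psiD subrr psi0 divff // psi_neq0.
Qed.
Lemma psiMn x n : psi (x *+ n) = psi x ^+ n.
Proof. elim: n => [|n IH]; first by rewrite mulr0n psi0 expr0.
by rewrite mulrS psiD IH exprS.
Qed.
Lemma psi_conj x : (psi x)^* = psi (- x).
Proof.
have [n [hn hx]] := addord x.
by rewrite psiN; apply: (root1_conj hn); rewrite -psiMn hx psi0.
Qed.

Lemma tauM u v : tau (u * v)%g = tau u * tau v.
Proof. by case: Htau => h _; apply: h. Qed.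
Lemma tau_neq0 u : tau u != 0.
Proof. by case: Htau. Qed.
Lemma tau1 : tau 1%g = 1.
Proof. apply: (mulfI (tau_neq0 1%g)); by rewrite -tauM mulg1 mulr1. Qed.
Lemma tauX u n : tau (u ^+ n)%g = tau u ^+ n.
Proof. elim: n => [|n IH]; first by rewrite expg0 tau1 expr0.
by rewrite expgS tauM IH exprS.
Qed.
Lemma tauV u : tau (u^-1)%g = (tau u)^-1.
Proof. apply: (mulfI (tau_neq0 u)); by rewrite -tauM mulgV tau1 divff // tau_neq0. Qed.
Lemma tau_conj u : (tau u)^* = (tau u)^-1.
Proof.
have [n [hn hx]] := mulord u.
by apply: (root1_conj hn); rewrite -tauX hx tau1.
Qed.

Definition t (x : R) : algC := if insub x is Some u then tau u else 0.
Lemma tE (u : {unit R}) : t (val u) = tau u.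
Proof. by rewrite /t valK. Qed.
Lemma unit_ex x : x \is a GRing.unit -> exists u : {unit R}, x = val u.
Proof. by move=> hx; exists (FinRing.Unit hx). Qed.
Lemma tM x y : x \is a GRing.unit -> y \is a GRing.unit -> t (x * y) = t x * t y.
Proof.
move=> /unit_ex [u ->] /unit_ex [v ->].
by rewrite -FinRing.val_unitM !tE tauM.
Qed.
Lemma t_conj x : x \is a GRing.unit -> (t x)^* = t (x^-1).
Proof.
move=> /unit_ex [u ->].
by rewrite -FinRing.val_unitV !tE tauV tau_conj.
Qed.
Lemma t1 : t 1 = 1.
Proof. by have := tE 1%g; rewrite FinRing.val_unit1 tau1. Qed.
Lemma t_neq0 x : x \is a GRing.unit -> t x != 0.
Proof. by move=> /unit_ex [u ->]; rewrite tE tau_neq0. Qed.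
Lemma t_conjK x : x \is a GRing.unit -> t x * (t x)^* = 1.
Proof.
move=> hx; rewrite t_conj // -tM ?unitrV // divrr // t1 //.
Qed.

Definition ann (J : {set R}) := [set x | [forall y in J, x * y == 0]].
Definition Mset := nonunits R.
Definition Soc := ann Mset.

Lemma annP (J : {set R}) (x : R) : reflect (forall y, y \in J -> x * y = 0) (x \in ann J).
Proof.
rewrite inE; apply: (iffP forall_inP) => h y hy; first by apply/eqP; apply: h.
by apply/eqP; apply: h.
Qed.

Lemma ann_ideal (J : {set R}) : is_ideal (ann J).
Proof.
split.
- by apply/annP => y _; rewrite mul0r.
- by move=> x y /annP hx /annP hy; apply/annP => z hz; rewrite mulrDl hx ?hy ?addr0.
- by move=> x /annP hx; apply/annP => z hz; rewrite mulNr hx ?oppr0.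
- by move=> r x /annP hx; apply/annP => z hz; rewrite -mulrA hx ?mulr0.
Qed.
Lemma setT_ideal : is_ideal [set: R].
Proof. by split; move=> *; rewrite inE. Qed.
Lemma mulset_ideal (x : R) (J : {set R}) : is_ideal J -> is_ideal [set x * y | y in J].
Proof.
case=> J0 JD JN JM; split.
- by apply/imsetP; exists 0 => //; rewrite mulr0.
- move=> a b /imsetP [y hy ->] /imsetP [z hz ->]; apply/imsetP; exists (y + z).
  by apply: JD. by rewrite mulrDr.
- move=> a /imsetP [y hy ->]; apply/imsetP; exists (- y); first by apply: JN.
  by rewrite mulrN.
- move=> r a /imsetP [y hy ->]; apply/imsetP; exists (r * y); first by apply: JM.
  by rewrite mulrCA.
Qed.

Lemma charsum (I : {set R}) (x : R) : is_ideal I ->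
  \sum_(y in I) psi (x * y) = if [forall y in I, x * y == 0] then #|I|%:R else 0.
Proof.
move=> hI; case: ifP => [/forall_inP h|hn].
  rewrite (eq_bigr (fun _ => 1)) => [|y hy]; last by rewrite (eqP (h y hy)) psi0.
  by rewrite sumr_const.
have hnot : ~ (forall z, z \in [set x * y | y in I] -> psi z = 1).
  move=> hall; have e := Hpsi.2 _ (mulset_ideal x hI) hall.
  move/negP: hn; apply; apply/forall_inP => y hy.
  have : x * y \in [set x * y | y in I] by apply/imsetP; exists y.
  by rewrite e inE.
case: (boolP [exists y in I, psi (x * y) != 1]) => [/exists_inP [y0 hy0 hne]|/exists_inPn hno]; last first.
  exfalso; apply: hnot => z /imsetP [y hy ->]; apply/eqP.
  by have := hno y hy; rewrite negbK.
set S := \sum_(y in I) psi (x * y).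
have hS : S = S * psi (x * y0).
  rewrite {1}/S (@sum_bij _ I I (fun y => y + y0)) //.
  - by rewrite /S big_distrl; apply: eq_bigr => y _; rewrite mulrDr psiD.
  - by move=> a b _ _; apply: addIr.
  - by case: hI => _ JD _ _ y hy; apply: JD.
have : S * (psi (x * y0) - 1) = 0 by rewrite mulrBr mulr1 -hS subrr.
by move/eqP; rewrite mulf_eq0 subr_eq0 (negbTE hne) orbF => /eqP.
Qed.

Lemma charsumT (y : R) : \sum_(x in [set: R]) psi (y * x) = if y == 0 then #|R|%:R else 0.
Proof.
rewrite charsum; last exact: setT_ideal.
rewrite cardsT; case: ifP => [/forall_inP h|/forall_inP h]; case: eqP => // hy.
- by have := h 1; rewrite inE mulr1 => /(_ isT) /eqP.
- by case: h => z _; rewrite hy mul0r.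
Qed.

Lemma card_ann (J : {set R}) : is_ideal J -> (#|J| * #|ann J|)%N = #|R|.
Proof.
move=> hJ.
have e1 : \sum_(x in [set: R]) \sum_(y in J) psi (x * y) = (#|J| * #|ann J|)%:R.
  rewrite (eq_bigr (fun x => if x \in ann J then #|J|%:R else 0)); last first.
    by move=> x _; rewrite charsum // inE.
  by rewrite sum_if natrM mulr_natr.
have e2 : \sum_(x in [set: R]) \sum_(y in J) psi (x * y) = #|R|%:R.
  rewrite exchange_big /=.
  rewrite (eq_bigr (fun y => if y == 0 then #|R|%:R else 0)); last first.
    by move=> y _; rewrite -charsumT; apply: eq_bigr => x _; rewrite mulrC.
  case: hJ => J0 _ _ _.
  rewrite (bigD1 0) //= eqxx big1 ?addr0 // => y /andP [_ /negbTE ->] //.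
apply/eqP; rewrite -(eqr_nat algC) -e1 -e2 //.
Qed.

Lemma M_ideal : is_ideal Mset.
Proof. exact: Hloc. Qed.
Lemma inM x : (x \in Mset) = nu x.
Proof. by rewrite /Mset nuE. Qed.

Lemma card_MSoc : (#|Mset| * #|Soc|)%N = #|R|.
Proof. exact: card_ann M_ideal. Qed.

Lemma ann_anti (A B : {set R}) : A \subset B -> ann B \subset ann A.
Proof.
move=> /subsetP hAB; apply/subsetP => x /annP h; apply/annP => y hy.
by apply: h; apply: hAB.
Qed.

Lemma annann (J : {set R}) : is_ideal J -> ann (ann J) = J.
Proof.
move=> hJ; apply/esym/eqP; rewrite eqEcard; apply/andP; split.
  apply/subsetP => y hy; apply/annP => x /annP hx; by rewrite mulrC hx.
have h1 := card_ann hJ; have h2 := card_ann (ann_ideal J).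
have hpos : (0 < #|ann J|)%N.
  by apply/card_gt0P; exists 0; apply/annP => y _; rewrite mul0r.
rewrite -(leq_pmul2l hpos) h2 -h1 mulnC //.
Qed.

Lemma Soc_subM s : s \in Soc -> nu s.
Proof.
move=> /annP hs; apply/negP => hu.
case: HnotF => x [hx0 hxu].
have := hs x; rewrite inM => /(_ hxu) hsx.
by move: hx0; rewrite -(mulKr hu x) hsx mulr0 eqxx.
Qed.

Lemma SocM s m : s \in Soc -> nu m -> s * m = 0.
Proof. by move=> /annP h hm; apply: h; rewrite inM. Qed.
Lemma Soc_sq s : s \in Soc -> s * s = 0.
Proof. by move=> hs; apply: SocM => //; apply: Soc_subM. Qed.
Lemma Soc_ideal : is_ideal Soc.
Proof. exact: ann_ideal. Qed.

Lemma card_M_lt : (#|Mset| < #|R|)%N.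
Proof.
rewrite -cardsT; apply: proper_card; rewrite properT; apply/eqP => e.
by have := in_setT (1 : R); rewrite -e inM /nu unitr1.
Qed.

Lemma card_Soc_gt1 : (1 < #|Soc|)%N.
Proof.
rewrite ltnNge; apply/negP => h.
have := card_MSoc; have := card_M_lt.
case: #|Soc| h => [|[|//]] _; rewrite ?muln0 ?muln1 => h1 h2.
  by move: (card_M_lt); rewrite -h2 ltn0.
by move: h1; rewrite h2 ltnn.
Qed.

Lemma unit_notann x : x \is a GRing.unit -> ~~ [forall s in Soc, x * s == 0].
Proof.
move=> hx; apply/negP => /forall_inP h.
have : Soc \subset [set 0].
  apply/subsetP => s hs; rewrite inE; have := h s hs.
  by rewrite -{2}(mulKr hx s) => /eqP ->; rewrite mulr0.
move/subset_leq_card; rewrite cards1 => h'.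
by have := card_Soc_gt1; rewrite ltnNge h'.
Qed.

Lemma Soc_sub (J : {set R}) : is_ideal J -> (exists2 y, y \in J & y != 0) -> Soc \subset J.
Proof.
move=> hJ [y hy hy0].
have hsub : ann J \subset Mset.
  apply/subsetP => x /annP hx; rewrite inM; apply/negP => hu.
  by move: hy0; rewrite -(mulKr hu y) hx // mulr0 eqxx.
by rewrite -(annann hJ); apply: ann_anti.
Qed.

Hypothesis Hnp : ~ primitive_mult_char tau.

Lemma tauSoc : [forall u : {unit R}, (val u - 1 \in Soc) ==> (tau u == 1)].
Proof.
case: (boolP [forall u : {unit R}, _]) => // hP; exfalso; apply: Hnp.
have trivSoc : forall J : {set R}, is_ideal J -> trivial_on_1plus tau J ->
    (exists2 y, y \in J & y != 0) -> False.
  move=> J hJ htr hy; move/negP: hP; apply; apply/forallP => u; apply/implyP => hu.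
  by apply/eqP; apply: htr; apply: (subsetP (Soc_sub hJ hy)).
split.
  move=> htr; exfalso; apply: (trivSoc [set: R] setT_ideal).
    by move=> u _; apply: htr.
  by exists 1; rewrite ?inE ?oner_neq0.
move=> _; split.
- split; rewrite ?inE ?eqxx //.
  + by move=> x y; rewrite !inE => /eqP -> /eqP ->; rewrite addr0.
  + by move=> x; rewrite !inE => /eqP ->; rewrite oppr0.
  + by move=> r x; rewrite !inE => /eqP ->; rewrite mulr0.
- by apply/subsetP => x; rewrite !inE => /eqP ->; rewrite unitr0.
- move=> u; rewrite inE subr_eq0 => /eqP hu.
  have -> : u = 1%g by apply: val_inj; rewrite hu.
  exact: tau1.
- move=> J hJ hJM htr; case: (boolP (J \subset [set 0])) => // /subsetPn [y hy hy0].
  by exfalso; apply: (trivSoc J hJ htr); exists y => //; move: hy0; rewrite inE.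
Qed.

Lemma tSoc s : s \in Soc -> t (1 + s) = 1.
Proof.
move=> hs; have hu : (1 + s) \is a GRing.unit by apply: unit_nuD; rewrite ?unitr1 ?Soc_subM.
have [u hu'] := unit_ex hu.
rewrite hu' tE; apply/eqP; move/forallP: tauSoc => /(_ u) /implyP; apply.
by rewrite -hu' addrC addKr.
Qed.

Definition Uset : {set R} := [set u : R | u \is a GRing.unit].
Definition phi (a u : R) : algC := t u * psi (u + a * u^-1).
Definition K (a : R) : algC := \sum_(u in Uset) phi a u.

Lemma Ktau_K a : Ktau tau psi a = K a.
Proof.
rewrite /Ktau /K.
have e : val @: [set: {unit R}] = Uset.
  apply/setP => x; rewrite inE; apply/imsetP/idP => [[u _ ->]|hx].
    exact: (valP u).
  by exists (FinRing.Unit hx).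
rewrite -e big_imset /=; last by move=> u v _ _; apply: val_inj.
by rewrite sum_setT; apply: eq_bigr => u _; rewrite /phi tE.
Qed.

Lemma inU x : (x \in Uset) = (x \is a GRing.unit).
Proof. by rewrite inE. Qed.

Lemma inv1s s : s \in Soc -> (1 + s)^-1 = 1 - s.
Proof.
move=> hs; apply: mulr1_eq.
by rewrite mulrBr mulr1 mulrDl mul1r Soc_sq // addr0 addrK.
Qed.

Lemma phi_shift a u s : u \is a GRing.unit -> s \in Soc ->
  phi a (u * (1 + s)) = phi a u * psi ((u - a * u^-1) * s).
Proof.
move=> hu hs.
have h1s : (1 + s) \is a GRing.unit by apply: unit_nuD; rewrite ?unitr1 ?Soc_subM.
rewrite /phi tM // tSoc // mulr1 invrM // inv1s // -mulrA -psiD; congr (_ * psi _).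
ring.
Qed.

Lemma K_red a : K a = \sum_(u in Uset) (if nu (u * u - a) then phi a u else 0).
Proof.
have hS : (#|Soc|%:R : algC) != 0 by rewrite pnatr_eq0 -lt0n; apply: ltnW; apply: card_Soc_gt1.
apply: (mulfI hS).
have e1 : #|Soc|%:R * K a = \sum_(s in Soc) \sum_(u in Uset) phi a u * psi ((u - a * u^-1) * s).
  rewrite mulr_natl -sumr_const; apply: eq_bigr => s hs.
  rewrite /K (@sum_bij _ Uset Uset (fun u => u * (1 + s))) //.
  - by apply: eq_bigr => u; rewrite inU => hu; rewrite phi_shift.
  - have h1s : (1 + s) \is a GRing.unit by apply: unit_nuD; rewrite ?unitr1 ?Soc_subM.
    by move=> x y _ _; apply: (mulIr h1s).
  - move=> u; rewrite !inU => hu; rewrite unitrM hu /=.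
    by apply: unit_nuD; rewrite ?unitr1 ?Soc_subM.
rewrite e1 exchange_big /= mulr_sumr; apply: eq_bigr => u; rewrite inU => hu.
rewrite -mulr_sumr charsum; last exact: Soc_ideal.
have -> : nu (u * u - a) = nu (u - a * u^-1).
  have -> : u * u - a = u * (u - a * u^-1) by rewrite mulrBr mulrCA divrr // mulr1.
  by rewrite nuM /nu hu.
case: (boolP (nu (u - a * u^-1))) => hn.
  have -> : [forall s in Soc, (u - a * u^-1) * s == 0].
    by apply/forall_inP => s hs; rewrite mulrC SocM.
  by rewrite mulrC.
rewrite (negbTE (unit_notann _)) ?mulr0 //; by move: hn; rewrite /nu negbK.
Qed.

Definition C (b : R) : {set R} := [set u | nu (u - b)].

Lemma inC b u : (u \in C b) = nu (u - b).
Proof. by rewrite inE. Qed.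

Lemma card_C b : #|C b| = #|Mset|.
Proof.
have -> : C b = [set b + m | m in Mset].
  apply/setP => u; rewrite inC; apply/idP/imsetP => [h|[m hm ->]].
    by exists (u - b); rewrite ?inM // addrC subrK.
  by rewrite addrC addKr -inM.
by rewrite card_imset //; apply: addrI.
Qed.

Lemma C_unit b u : b \is a GRing.unit -> u \in C b -> u \is a GRing.unit.
Proof. by move=> hb; rewrite inC => h; apply: (unit_nu_eq hb). Qed.

Lemma phi_conj a v : v \is a GRing.unit ->
  (phi a v)^* = t (v^-1) * psi (- (v + a * v^-1)).
Proof. by move=> hv; rewrite /phi rmorphM /= t_conj // psi_conj. Qed.

Lemma nuX x y : nu x -> nu y -> nu (x * y).
Proof. by move=> hx _; apply: nuMr. Qed.

Section Ab.
Variables (a b : R).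
Hypothesis hb : b \is a GRing.unit.
Hypothesis hab : nu (b * b - a).

Definition A := \sum_(u in C b) phi a u.

Lemma unit1z z : nu z -> (1 - z) \is a GRing.unit.
Proof. by move=> hz; apply: unit_nuD; rewrite ?unitr1 ?nuN. Qed.

Lemma g_inM z u : nu z -> u \in C b -> nu (u - a * u^-1 * (1 - z)^-1).
Proof.
move=> hz huC; have hu := C_unit hb huC.
set w := (1 - z)^-1.
have hw : (1 - z) * w = 1 by rewrite /w mulrV // unit1z.
have e : u * (u - a * u^-1 * w) = (u - b) * (u + b) + (b * b - a) + a * (- (z * w)).
  have -> : - (z * w) = 1 - w by rewrite -{1}hw; ring.
  have -> : u * (u - a * u^-1 * w) = u * u - a * w - a * w * (u * u^-1 - 1) by ring.
  by rewrite divrr // subrr mulr0 subr0; ring.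
have : nu (u * (u - a * u^-1 * w)).
  rewrite e; apply: nuD; first apply: nuD => //.
    by apply: nuMr; rewrite -inC.
  by apply: nuMl; apply: nuN; apply: nuMr.
by rewrite nuM /nu hu.
Qed.

Lemma g_inj z : nu z -> {in C b &, injective (fun u => u - a * u^-1 * (1 - z)^-1)}.
Proof.
move=> hz u1 u2 h1 h2 /= e.
have hu1 := C_unit hb h1; have hu2 := C_unit hb h2.
set w := (1 - z)^-1 in e *.
have hw : (1 - z) * w = 1 by rewrite /w mulrV // unit1z.
have hc : (u1 * u2 + a * w) \is a GRing.unit.
  have -> : u1 * u2 + a * w = 2%:R * (b * b) +
     ((u1 - b) * u2 + b * (u2 - b) - (b * b - a) + a * (z * w)).
    have -> : z * w = w - 1 by rewrite -{1}hw; ring.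
    ring.
  apply: unit_nuD; first by rewrite unitrM unit2 unitrM hb.
  apply: nuD; last by apply: nuMl; apply: nuMr.
  apply: nuB => //; apply: nuD; first by apply: nuMr; rewrite -inC.
  by apply: nuMl; rewrite -inC.
have e2 : (u1 - u2) * (u1 * u2 + a * w) = 0.
  have -> : (u1 - u2) * (u1 * u2 + a * w) =
      u1 * u2 * ((u1 - a * u1^-1 * w) - (u2 - a * u2^-1 * w))
      + a * w * u2 * (u1 * u1^-1 - 1) - a * w * u1 * (u2 * u2^-1 - 1) by ring.
  by rewrite e subrr mulr0 !divrr // !subrr !mulr0 !addr0 subrr.
apply/eqP; rewrite -subr_eq0; apply/eqP.
by rewrite -(mulrK hc (u1 - u2)) e2 mul0r.
Qed.

Lemma term_eq u z : u \is a GRing.unit -> nu z ->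
  phi a u * (phi a (u * (1 - z)))^* =
  t ((1 - z)^-1) * psi (z * (u - a * u^-1 * (1 - z)^-1)).
Proof.
move=> hu hz; have h1z := unit1z hz.
rewrite phi_conj ?unitrM ?hu // invrM // /phi.
rewrite mulrACA tM ?unitrV // [t u * _]mulrCA -[t u * t u^-1]tM ?unitrV // divrr // t1 mulr1 -psiD.
congr (_ * psi _).
set w := (1 - z)^-1; have hw : (1 - z) * w = 1 by rewrite /w mulrV.
have -> : u + a * u^-1 - (u * (1 - z) + a * (w * u^-1)) =
   z * (u - a * u^-1 * w) + a * u^-1 * (1 - (1 - z) * w) by ring.
by rewrite hw subrr mulr0 addr0.
Qed.

Lemma A_norm : A * A^* = #|R|%:R.
Proof.
rewrite /A rmorph_sum /= mulr_suml.
rewrite (eq_bigr (fun u => \sum_(z in Mset) t ((1 - z)^-1) *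
            psi (z * (u - a * u^-1 * (1 - z)^-1)))); last first.
  move=> u huC; have hu := C_unit hb huC.
  rewrite mulr_sumr (@sum_bij _ Mset (C b) (fun z => u * (1 - z))).
  - by apply: eq_bigr => z; rewrite inM => hz; rewrite term_eq.
  - move=> z1 z2; rewrite !inM => h1 h2 /= e.
    have := mulrI hu e; move/addrI/oppr_inj => //.
  - move=> z; rewrite inM inC => hz.
    have -> : u * (1 - z) - b = (u - b) - u * z by ring.
    by apply: nuB; rewrite -?inC //; apply: nuMl.
  - by rewrite card_C.
rewrite exchange_big /= (eq_bigr (fun z => if z \in Soc then #|Mset|%:R else 0)); last first.
  move=> z; rewrite inM => hz.
  rewrite -mulr_sumr -(@sum_bij _ (C b) Mset (fun u => u - a * u^-1 * (1 - z)^-1) (fun y => psi (z * y))) /=; last 3 first.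
  - exact: g_inj.
  - by move=> u hu; rewrite inM; apply: g_inM.
  - by rewrite card_C.
  rewrite charsum; last exact: M_ideal.
  have -> : [forall y in Mset, z * y == 0] = (z \in Soc) by rewrite /Soc inE.
  case: ifP => hs; last by rewrite mulr0.
  have hs' : - z \in Soc by case: Soc_ideal => _ _ hN _; apply: hN.
  by rewrite inv1s // opprK tSoc // mul1r.
rewrite sum_if_sub; last by apply/subsetP => z hz; rewrite inM; apply: Soc_subM.
by rewrite -card_MSoc natrM mulr_natr.
Qed.

Lemma hbN : (- b) \is a GRing.unit. Proof. by rewrite unitrN. Qed.

Lemma CU (x : R) : x \is a GRing.unit -> C x \subset Uset.
Proof. by move=> hx; apply/subsetP => u hu; rewrite inU; apply: C_unit hu. Qed.

Lemma sum_split (F : R -> algC) :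
  \sum_(u in Uset) (if nu (u * u - a) then F u else 0) =
  \sum_(u in C b) F u + \sum_(u in C (- b)) F u.
Proof.
rewrite -(sum_if_subF _ (CU hb)) -(sum_if_subF _ (CU (hbN))) -big_split /=.
apply: eq_bigr => u hu; rewrite !inC.
have e : nu (u * u - a) = nu (u - b) || nu (u - - b).
  have -> : u * u - a = (u - b) * (u - - b) + (b * b - a) by ring.
  apply/idP/idP => [h|h].
    by rewrite -nuM; have := nuB h hab; rewrite addrK.
  by apply: nuD => //; rewrite nuM.
have ex : ~~ (nu (u - b) && nu (u - - b)).
  apply/negP => /andP [h1 h2].
  have := nuB h2 h1; have -> : u - - b - (u - b) = 2%:R * b by ring.
  by rewrite /nu unitrM unit2 hb.
rewrite e; move: ex; case: (nu (u - b)); case: (nu (u - - b)) => //= _.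
- by rewrite addr0.
- by rewrite add0r.
- by rewrite addr0.
Qed.
End Ab.

Definition Y a := \sum_(u in Uset) (if nu (u * u - a) then
   phi a u * (\sum_(v in C (- u)) phi a v)^* else 0).
Definition Z a := \sum_(u in Uset) (if nu (u * u - a) then
   phi a u * (\sum_(v in C u) phi a v) * ((\sum_(v in C (- u)) phi a v)^*) ^+ 2 else 0).
Definition n a := \sum_(u in Uset) (if nu (u * u - a) then (1 : algC) else 0).

Lemma C_eq x y : nu (x - y) -> C x = C y.
Proof.
move=> h; apply/setP => v; rewrite !inC; apply/idP/idP => hv.
  by have := nuD hv h; rewrite addrA subrK.
by have := nuB hv h; rewrite opprB addrA subrK.
Qed.

Lemma per_a a : `|K a| ^+ 4 = 6%:R * #|R|%:R ^+ 2 * (n a / (2 * #|Mset|)%:R)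
   + 4%:R * #|R|%:R * Y a + Z a.
Proof.
have -> : `|K a| ^+ 4 = (K a * (K a)^*) ^+ 2 by rewrite -normCK -exprM.
case: (boolP [exists u in Uset, nu (u * u - a)]) => [/exists_inP [b hbU hab]|/exists_inPn hno].
  have hb : b \is a GRing.unit by rewrite -inU.
  have habN : nu ((- b) * (- b) - a) by rewrite mulrNN.
  have hK : K a = A a b + A a (- b) by rewrite K_red (sum_split hb hab).
  have hn : n a = (2 * #|Mset|)%:R.
    rewrite /n (sum_split hb hab) !sumr_const !card_C.
    by rewrite -mulrnDr mul2n -addnn.
  have hY : Y a = A a b * (A a (- b))^* + A a (- b) * (A a b)^*.
    rewrite /Y (sum_split hb hab) /A !mulr_suml; congr (_ + _); apply: eq_bigr => u.
      rewrite inC => hu; rewrite (@C_eq (- u) (- b)) //.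
      by rewrite opprK addrC nuBC.
    rewrite inC => hu; rewrite (@C_eq (- u) b) ?opprK //.
    by move: (nuN hu); rewrite opprD opprK.
  have hZ : Z a = A a b * A a b * ((A a (- b))^*) ^+ 2 + A a (- b) * A a (- b) * ((A a b)^*) ^+ 2.
    rewrite /Z (sum_split hb hab) /A; congr (_ + _).
      rewrite !mulr_suml; apply: eq_bigr => u; rewrite inC => hu.
      by rewrite (@C_eq u b) // (@C_eq (- u) (- b)) // opprK addrC nuBC.
    rewrite !mulr_suml; apply: eq_bigr => u; rewrite inC => hu.
    rewrite (@C_eq u (- b)) // (@C_eq (- u) b) ?opprK //.
    by move: (nuN hu); rewrite opprD opprK.
  have h1 := A_norm hb hab.
  have hbN' : (- b) \is a GRing.unit by rewrite unitrN.
  have h2 := A_norm hbN' habN.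
  rewrite hK hn hY hZ rmorphD /= divff; last by rewrite pnatr_eq0 muln_eq0 /= -lt0n; apply/card_gt0P; exists 0; rewrite inM nu0.
  set A1 := A a b; set A2 := A a (- b).
  have -> : 6%:R * #|R|%:R ^+ 2 * 1 = (A1 * A1^*) ^+ 2 + (A2 * A2^*) ^+ 2 +
      4%:R * ((A1 * A1^*) * (A2 * A2^*)) :> algC.
    by rewrite h1 h2; ring.
  have -> : 4%:R * #|R|%:R = 2%:R * (A1 * A1^* + A2 * A2^*) :> algC.
    by rewrite h1 h2; ring.
  ring.
have hK : K a = 0.
  rewrite K_red big1 // => u hu; have := hno u hu; by case: ifP.
have hn : n a = 0.
  rewrite /n big1 // => u hu; have := hno u hu; by case: ifP.
have hY : Y a = 0.
  rewrite /Y big1 // => u hu; have := hno u hu; by case: ifP.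
have hZ : Z a = 0.
  rewrite /Z big1 // => u hu; have := hno u hu; by case: ifP.
by rewrite hK hn hY hZ mul0r !mulr0 !addr0 expr0n /= mul0r mulr0.
Qed.

Lemma sum_n : \sum_(a in Uset) n a = (#|Uset| * #|Mset|)%:R.
Proof.
rewrite /n exchange_big /= (eq_bigr (fun _ => #|Mset|%:R)); last first.
  move=> u; rewrite inU => hu.
  rewrite (eq_bigr (fun a => if a \in C (u * u) then 1 else 0)); last first.
    by move=> a _; rewrite inC nuBC.
  by rewrite sum_if_subF ?CU ?unitrM ?hu // sumr_const card_C.
by rewrite sumr_const natrM mulr_natl.
Qed.

Lemma KL s c : s \is a GRing.unit -> c \is a GRing.unit ->
  \sum_(a in Uset) (if nu (s - a) then psi (a * c) else 0) = 0.
Proof.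
move=> hs hc.
rewrite (eq_bigr (fun a => if a \in C s then psi (a * c) else 0)); last first.
  by move=> a _; rewrite inC nuBC.
rewrite sum_if_subF ?CU //.
rewrite (@sum_bij _ Mset (C s) (fun m => s + m)); first last.
- by rewrite card_C.
- by move=> m; rewrite inM inC addrC addKr.
- by move=> x y _ _; apply: addrI.
rewrite (eq_bigr (fun m => psi (s * c) * psi (c * m))); last first.
  by move=> m _; rewrite mulrDl psiD [m * c]mulrC.
rewrite -mulr_sumr charsum; last exact: M_ideal.
case: ifP => [/forall_inP h|]; last by rewrite mulr0.
case: HnotF => x [hx0 hxu].
have := h x; rewrite inM => /(_ hxu) /eqP hcx.
by move: hx0; rewrite -(mulKr hc x) hcx mulr0 eqxx.
Qed.

Lemma KLW s c W : s \is a GRing.unit -> c \is a GRing.unit ->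
  \sum_(a in Uset) (if nu (s - a) then W * psi (a * c) else 0) = 0.
Proof.
move=> hs hc.
rewrite (eq_bigr (fun a => W * (if nu (s - a) then psi (a * c) else 0))); last first.
  by move=> a _; case: ifP; rewrite ?mulr0.
by rewrite -mulr_sumr KL ?mulr0.
Qed.

Lemma push (P : pred R) (A0 : {set R}) (f : R -> R -> algC) :
  \sum_(a in Uset) (if P a then \sum_(x in A0) f a x else 0) =
  \sum_(x in A0) \sum_(a in Uset) (if P a then f a x else 0).
Proof.
rewrite (eq_bigr (fun a => \sum_(x in A0) (if P a then f a x else 0))).
  by rewrite exchange_big.
by move=> a _; rewrite sum_if_in.
Qed.

Lemma inv_nu x y : x \is a GRing.unit -> y \is a GRing.unit -> nu (x - y) ->
  nu (x^-1 - y^-1).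
Proof.
move=> hx hy h.
have -> : x^-1 - y^-1 = (y - x) * x^-1 * y^-1 - x^-1 * (y * y^-1 - 1)
   + (x * x^-1 - 1) * y^-1 by ring.
rewrite !divrr // !subrr mulr0 mul0r subr0 addr0.
by apply: nuMr; apply: nuMr; rewrite nuBC.
Qed.

Lemma pair_id a u v : u \is a GRing.unit -> v \is a GRing.unit ->
  phi a u * (phi a v)^* = (t u * t (v^-1) * psi (u - v)) * psi (a * (u^-1 - v^-1)).
Proof.
move=> hu hv; rewrite phi_conj // /phi !opprD !mulrDr !mulrN !psiD; ring.
Qed.

Lemma cY u v : u \is a GRing.unit -> v \in C (- u) -> (u^-1 - v^-1) \is a GRing.unit.
Proof.
move=> hu hv; have hv' := C_unit (_ : (- u) \is a GRing.unit) hv.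
have hnu : (- u) \is a GRing.unit by rewrite unitrN.
have hvu := hv' hnu.
have -> : u^-1 - v^-1 = 2%:R * u^-1 + ((- u)^-1 - v^-1) by rewrite invrN; ring.
apply: unit_nuD; first by rewrite unitrM unit2 unitrV.
by apply: inv_nu => //; rewrite nuBC -inC.
Qed.

Lemma sum_Y : \sum_(a in Uset) Y a = 0.
Proof.
rewrite /Y exchange_big /= big1 // => u; rewrite inU => hu.
rewrite (eq_bigr (fun a => if nu (u * u - a) then \sum_(v in C (- u))
   (t u * t (v^-1) * psi (u - v)) * psi (a * (u^-1 - v^-1)) else 0)); last first.
  move=> a _; case: ifP => // _; rewrite rmorph_sum mulr_sumr; apply: eq_bigr => v hv.
  by rewrite pair_id // (C_unit _ hv) // unitrN.
rewrite push big1 // => v hv; apply: KLW; first by rewrite unitrM hu.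
exact: cY.
Qed.

Lemma quad_id a u v w1 w2 : u \is a GRing.unit -> v \is a GRing.unit ->
  w1 \is a GRing.unit -> w2 \is a GRing.unit ->
  phi a u * phi a v * (phi a w1)^* * (phi a w2)^* =
  (t u * t v * t (w1^-1) * t (w2^-1) * psi (u + v - w1 - w2)) *
    psi (a * (u^-1 + v^-1 - w1^-1 - w2^-1)).
Proof.
move=> hu hv hw1 hw2; rewrite !phi_conj // /phi !opprD !mulrDr !mulrN !psiD; ring.
Qed.

Lemma cZ u v w1 w2 : u \is a GRing.unit -> v \in C u -> w1 \in C (- u) -> w2 \in C (- u) ->
  (u^-1 + v^-1 - w1^-1 - w2^-1) \is a GRing.unit.
Proof.
move=> hu hv hw1 hw2.
have hnu : (- u) \is a GRing.unit by rewrite unitrN.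
have hv' := C_unit hu hv; have hw1' := C_unit hnu hw1; have hw2' := C_unit hnu hw2.
have -> : u^-1 + v^-1 - w1^-1 - w2^-1 = (2%:R * 2%:R) * u^-1 +
   ((v^-1 - u^-1) + ((- u)^-1 - w1^-1) + ((- u)^-1 - w2^-1)) by rewrite invrN; ring.
apply: unit_nuD; first by rewrite !unitrM unit2 unitrV.
apply: nuD; first apply: nuD.
- by apply: inv_nu => //; rewrite -inC.
- by apply: inv_nu => //; rewrite nuBC -inC.
- by apply: inv_nu => //; rewrite nuBC -inC.
Qed.

Lemma Z_expand a u : u \is a GRing.unit ->
  phi a u * (\sum_(v in C u) phi a v) * ((\sum_(v in C (- u)) phi a v)^*) ^+ 2 =
  \sum_(v in C u) \sum_(w1 in C (- u)) \sum_(w2 in C (- u))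
    phi a u * phi a v * (phi a w1)^* * (phi a w2)^*.
Proof.
move=> hu.
rewrite expr2 rmorph_sum mulr_sumr mulr_suml. apply: eq_big => // v _.
rewrite mulr_suml mulr_sumr; apply: eq_big => // w1 _.
rewrite !mulr_sumr; apply: eq_big => // w2 _.
by rewrite !mulrA.
Qed.

Lemma sum_Z : \sum_(a in Uset) Z a = 0.
Proof.
rewrite /Z exchange_big /= big1 // => u; rewrite inU => hu.
have hnu : (- u) \is a GRing.unit by rewrite unitrN.
rewrite (eq_bigr (fun a => if nu (u * u - a) then
   \sum_(v in C u) \sum_(w1 in C (- u)) \sum_(w2 in C (- u))
   (t u * t v * t (w1^-1) * t (w2^-1) * psi (u + v - w1 - w2)) *
    psi (a * (u^-1 + v^-1 - w1^-1 - w2^-1)) else 0)); last first.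
  move=> a _; case: ifP => // _; rewrite Z_expand //.
  apply: eq_big => // v hv; apply: eq_big => // w1 hw1; apply: eq_big => // w2 hw2.
  by apply: quad_id => //; [apply: (C_unit hu) | apply: (C_unit hnu) | apply: (C_unit hnu)].
rewrite push big1 // => v hv.
rewrite push big1 // => w1 hw1.
rewrite push big1 // => w2 hw2.
apply: KLW; first by rewrite unitrM hu.
exact: cZ.
Qed.

Lemma main_sec : \sum_(a : {unit R}) `|Ktau tau psi (val a)| ^+ 4
    = 3%:R * #|[set: {unit R}]|%:R * (#|[set: R]|%:R) ^+ 2.
Proof.
rewrite (eq_bigr (fun a => `|K (val a)| ^+ 4)); last by move=> a _; rewrite Ktau_K.
rewrite (sum_unit (fun x => `|K x| ^+ 4)).
change (\sum_(x in Uset) `|K x| ^+ 4 = 3%:R * #|[set: {unit R}]|%:R * (#|[set: R]|%:R) ^+ 2).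
rewrite (eq_bigr _ (fun a _ => per_a a)) !big_split /= -!mulr_sumr sum_Y sum_Z -mulr_suml sum_n.
have hU : #|[set: {unit R}]| = #|Uset|.
  apply/eqP; rewrite -(eqr_nat algC) cardsT -!sumr_const.
  by rewrite (sum_unit (fun _ => 1)).
have hM : (#|Mset|%:R : algC) != 0.
  by rewrite pnatr_eq0 -lt0n; apply/card_gt0P; exists 0; rewrite inM nu0.
rewrite hU cardsT !natrM !mulr0 !addr0.
field.
exact: hM.
Qed.

End Pf.

Unset Implicit Arguments.
Set Strict Implicit.

Theorem mainTheorem12 (R : finComUnitRingType)
  (psi : R -> algC) (tau : {unit R} -> algC) :
  is_local R ->
  (exists x : R, x != 0 /\ x \isn't a GRing.unit) ->
  (2%:R : R) \notin nonunits R ->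
  primitive_add_char psi ->
  is_mult_char tau ->
  ~ primitive_mult_char tau ->
  \sum_(a : {unit R}) `|Ktau tau psi (val a)| ^+ 4
    = 3%:R * #|[set: {unit R}]|%:R * (#|[set: R]|%:R) ^+ 2.
Proof.
move=> h1 h2 h3 h4 h5 h6; exact: (main_sec h1 h2 h3 h4 h5 h6).
Qed.
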